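(* Let $(\dot E,\Lambda)$ be a B-hypergraph. Then $(\mathrm{AT}(\dot E,\Lambda),\le)$ is a lattice: $\le$ is a partial order and any two admissible triples have a supremum and an infimum.
   Context: A graph $E=(E^0,E^1,r,s)$. A bi-separated graph with distinguished subsets is $\dot E=(E,(C,S),(D,T))$: $C=\bigsqcup_v C_v$ with $C_v$ a partition of $s^{-1}(v)$ into nonempty sets for each non-sink $v$; $D=\bigsqcup_v D_v$ with $D_v$ a partition of $r^{-1}(v)$ for each non-source $v$; $|X\cap Y|\le 1$ for $X\in C$, $Y\in D$; $C_{\rm fin},D_{\rm fin}$ the finite members, $S\subseteq C_{\rm fin}$, $T\subseteq D_{\rm fin}$. For $X\in C$, $s(X)$ is the common source of its edges; for $Y\in D$, $r(Y)$ the common range. A B-hypergraph is a pair $(\dot E,\Lambda)$ with $\Lambda$ a nonempty set and, for each $\lambda\in\Lambda$, subsets $\mathcal X_\lambda\subseteq C$, $\mathcal Y_\lambda\subseteq D$, such that: (i) $X\notin S$, $Y\notin T$ implies $X\cap Y=\emptyset$; (ii) $\alpha\ne\beta$, $X\in\mathcal X_\alpha$, $Y\in\mathcal Y_\beta$ implies $X\cap Y=\emptyset$; (iii) $X\in\mathcal X_\lambda$, $Y\in\mathcal Y_\lambda$ implies $X\cap Y\ne\emptyset$; (iv) $\Lambda=\Lambda_T^S\sqcup\Lambda^S_{\rm fin}\sqcup\Lambda^S_\infty\sqcup\Lambda_T^{\rm fin}\sqcup\Lambda_T^\infty$ such that, with $\Lambda^S=\Lambda_T^S\sqcup\Lambda^S_{\rm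 fin}\sqcup\Lambda^S_\infty$ and $\Lambda_T=\Lambda_T^S\sqcup\Lambda_T^{\rm fin}\sqcup\Lambda_T^\infty$: $S=\bigsqcup_{\lambda\in\Lambda^S}\mathcal X_\lambda$, $T=\bigsqcup_{\lambda\in\Lambda_T}\mathcal Y_\lambda$, $C_{\rm fin}\setminus S=\bigsqcup_{\lambda\in\Lambda_T^{\rm fin}}\mathcal X_\lambda$, $D_{\rm fin}\setminus T=\bigsqcup_{\lambda\in\Lambda^S_{\rm fin}}\mathcal Y_\lambda$, $C\setminus C_{\rm fin}=\bigsqcup_{\lambda\in\Lambda_T^\infty}\mathcal X_\lambda$, $D\setminus D_{\rm fin}=\bigsqcup_{\lambda\in\Lambda^S_\infty}\mathcal Y_\lambda$. For $\lambda\in\Lambda$, $s(\lambda)=\{s(X):X\in\mathcal X_\lambda\}$, $r(\lambda)=\{r(Y):Y\in\mathcal Y_\lambda\}$. A subset $V\subseteq E^0$ is bisaturated if for every $\lambda\in\Lambda_T^S$: $s(\lambda)\subseteq V\iff r(\lambda)\subseteq V$. For bisaturated $V$ and $\lambda\in\Lambda$, let $\mathcal X_{\lambda/V}=\{X\in\mathcal X_\lambda: s(X)\notin V\}$, $\mathcal Y_{\lambda/V}=\{Y\in\mathcal Y_\lambda: r(Y)\notin V\}$, and define $\Lambda_T^S/V=\{\lambda\in\Lambda_T^S: \mathcal X_{\lambda/V}\ne\emptyset\}$, $\Lambda^S_{\rm fin}/V=\{\lambda\in\Lambda^S_{\rm fin}:\mathcal X_{\lambda/V}\ne\emptyset\}$,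 $\Lambda^S_\infty/V=\{\lambda\in\Lambda^S_\infty: 0<|\mathcal X_{\lambda/V}|<\infty\}$, $\Lambda_T^{\rm fin}/V=\{\lambda\in\Lambda_T^{\rm fin}:\mathcal Y_{\lambda/V}\ne\emptyset\}$, $\Lambda_T^\infty/V=\{\lambda\in\Lambda_T^\infty:0<|\mathcal Y_{\lambda/V}|<\infty\}$, $\Lambda/V$ their union, $\Lambda^S(V)=\Lambda^S\setminus\Lambda/V$, $\Lambda_T(V)=\Lambda_T\setminus\Lambda/V$. An admissible triple is $(V,\Sigma,\Theta)$ with $V$ bisaturated, $\Sigma\subseteq\Lambda^S_{\rm fin}/V\sqcup\Lambda^S_\infty/V$, $\Theta\subseteq\Lambda_T^{\rm fin}/V\sqcup\Lambda_T^\infty/V$; $\mathrm{AT}(\dot E,\Lambda)$ is the set of them. Define $(V_1,\Sigma_1,\Theta_1)\le(V_2,\Sigma_2,\Theta_2)$ iff $V_1\subseteq V_2$, $\Sigma_1\subseteq\Sigma_2\sqcup\Lambda^S(V_2)$ and $\Theta_1\subseteq\Theta_2\sqcup\Lambda_T(V_2)$. *)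

(* Defs.v *)
From Stdlib Require Import List.
Set Implicit Arguments.

Definition finite {A : Type} (P : A -> Prop) : Prop :=
  exists l : list A, forall x, P x -> In x l.

Record Graph := mkGraph {
  V0 : Type;
  E1 : Type;
  src : E1 -> V0;
  rng : E1 -> V0
}.

(* The members of C are indexed by the type Cb (inC B X e : edge e lies in X);
   sC X is the common source s(X) of the edges of X.  Every edge lies in
   exactly one member of C, members are nonempty and all edges of a member
   share the source sC X: this is exactly "C = ⊔_v C_v, C_v a partition of
   s^{-1}(v) into nonempty sets".  Dually for D with ranges. *)
Record BiSep (G : Graph) := mkBiSep {
  Cb : Type;
  inC : Cb -> E1 G -> Prop;
  sC : Cb -> V0 G;
  C_src : forall X e, inC X e -> src G e = sC X;
  C_nonempty : forall X, exists e, inC X e;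
  C_part : forall e, exists X, inC X e /\ (forall X', inC X' e -> X' = X);
  Db : Type;
  inD : Db -> E1 G -> Prop;
  rD : Db -> V0 G;
  D_rng : forall Y e, inD Y e -> rng G e = rD Y;
  D_nonempty : forall Y, exists e, inD Y e;
  D_part : forall e, exists Y, inD Y e /\ (forall Y', inD Y' e -> Y' = Y);
  CD_inter : forall X Y e e', inC X e -> inD Y e -> inC X e' -> inD Y e' -> e = e';
  Sset : Cb -> Prop;
  Tset : Db -> Prop;
  S_fin : forall X, Sset X -> finite (inC X);
  T_fin : forall Y, Tset Y -> finite (inD Y)
}.

Inductive Kind := kTS | kSfin | kSinf | kTfin | kTinf.
Definition isS (k : Kind) : Prop := k = kTS \/ k = kSfin \/ k = kSinf.
Definition isT (k : Kind) : Prop := k = kTS \/ k = kTfin \/ k = kTinf.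

Definition disj_union {L A : Type} (P : A -> Prop) (J : L -> Prop)
  (F : L -> A -> Prop) : Prop :=
  (forall x, P x <-> exists l, J l /\ F l x) /\
  (forall a b x, J a -> J b -> F a x -> F b x -> a = b).

Definition meets {G : Graph} {B : BiSep G} (X : Cb B) (Y : Db B) : Prop :=
  exists e, inC B X e /\ inD B Y e.

Record BHyper (G : Graph) (B : BiSep G) := mkBHyper {
  Lam : Type;
  Lam_ne : inhabited Lam;
  kind : Lam -> Kind;
  Xl : Lam -> Cb B -> Prop;
  Yl : Lam -> Db B -> Prop;
  h_i : forall X Y, ~ Sset B X -> ~ Tset B Y -> ~ meets X Y;
  h_ii : forall a b X Y, a <> b -> Xl a X -> Yl b Y -> ~ meets X Y;
  h_iii : forall l X Y, Xl l X -> Yl l Y -> meets X Y;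
  h_S : disj_union (Sset B) (fun l => isS (kind l)) Xl;
  h_T : disj_union (Tset B) (fun l => isT (kind l)) Yl;
  h_Cfin : disj_union (fun X => finite (inC B X) /\ ~ Sset B X)
                      (fun l => kind l = kTfin) Xl;
  h_Dfin : disj_union (fun Y => finite (inD B Y) /\ ~ Tset B Y)
                      (fun l => kind l = kSfin) Yl;
  h_Cinf : disj_union (fun X => ~ finite (inC B X)) (fun l => kind l = kTinf) Xl;
  h_Dinf : disj_union (fun Y => ~ finite (inD B Y)) (fun l => kind l = kSinf) Yl
}.

Section Defs.
Variables (G : Graph) (B : BiSep G) (H : BHyper B).

Definition bisaturated (V : V0 G -> Prop) : Prop :=
  forall l, kind H l = kTS ->
    ((forall X, Xl H l X -> V (sC B X)) <-> (forall Y, Yl H l Y -> V (rD B Y))).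

Definition Xquot (V : V0 G -> Prop) (l : Lam H) (X : Cb B) : Prop :=
  Xl H l X /\ ~ V (sC B X).
Definition Yquot (V : V0 G -> Prop) (l : Lam H) (Y : Db B) : Prop :=
  Yl H l Y /\ ~ V (rD B Y).

Definition inQuot (V : V0 G -> Prop) (l : Lam H) : Prop :=
  match kind H l with
  | kTS => exists X, Xquot V l X
  | kSfin => exists X, Xquot V l X
  | kSinf => (exists X, Xquot V l X) /\ finite (Xquot V l)
  | kTfin => exists Y, Yquot V l Y
  | kTinf => (exists Y, Yquot V l Y) /\ finite (Yquot V l)
  end.

Definition LamS_V (V : V0 G -> Prop) (l : Lam H) : Prop :=
  isS (kind H l) /\ ~ inQuot V l.
Definition LamT_V (V : V0 G -> Prop) (l : Lam H) : Prop :=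
  isT (kind H l) /\ ~ inQuot V l.

Record triple := mkTriple {
  tV : V0 G -> Prop;
  tSig : Lam H -> Prop;
  tThe : Lam H -> Prop
}.

Definition AT (t : triple) : Prop :=
  bisaturated (tV t) /\
  (forall l, tSig t l -> (kind H l = kSfin \/ kind H l = kSinf) /\ inQuot (tV t) l) /\
  (forall l, tThe t l -> (kind H l = kTfin \/ kind H l = kTinf) /\ inQuot (tV t) l).

Definition le (t1 t2 : triple) : Prop :=
  (forall v, tV t1 v -> tV t2 v) /\
  (forall l, tSig t1 l -> tSig t2 l \/ LamS_V (tV t2) l) /\
  (forall l, tThe t1 l -> tThe t2 l \/ LamT_V (tV t2) l).

End Defs.

Arguments AT {G B} H t.
Arguments le {G B} H t1 t2.

(* Main.v *)
Require Import Defs.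
From Stdlib Require Import Classical FunctionalExtensionality PropExtensionality.

Section Aux.
Variables (G : Graph) (B : BiSep G) (H : BHyper B).

Lemma fin_sub {A : Type} (P Q : A -> Prop) :
  (forall x, P x -> Q x) -> finite Q -> finite P.
Proof. intros HPQ [l Hl]. exists l. intros x Hx. apply Hl, HPQ, Hx. Qed.

Lemma quot_mid (Va Vb Vc : V0 G -> Prop) (l : Lam H) :
  (forall v, Va v -> Vb v) -> (forall v, Vb v -> Vc v) ->
  inQuot H Va l -> inQuot H Vc l -> inQuot H Vb l.
Proof.
  intros Hab Hbc Ha Hc. unfold inQuot, Xquot, Yquot in *.
  destruct (kind H l).
  - destruct Hc as [X [H1 H2]]. exists X. split; auto.
  - destruct Hc as [X [H1 H2]]. exists X. split; auto.
  - destruct Hc as [[X [H1 H2]] _]. split. exists X. split; auto.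
    destruct Ha as [_ Hf]. eapply fin_sub; [|exact Hf].
    intros x [H1' H2']. split; auto.
  - destruct Hc as [X [H1 H2]]. exists X. split; auto.
  - destruct Hc as [[X [H1 H2]] _]. split. exists X. split; auto.
    destruct Ha as [_ Hf]. eapply fin_sub; [|exact Hf].
    intros x [H1' H2']. split; auto.
Qed.

Lemma bisat_inter (V1 V2 : V0 G -> Prop) :
  bisaturated H V1 -> bisaturated H V2 ->
  bisaturated H (fun v => V1 v /\ V2 v).
Proof.
  intros B1 B2 l Hk. specialize (B1 l Hk). specialize (B2 l Hk).
  split; intros Hx; split; firstorder.
Qed.

Definition clos (V1 V2 : V0 G -> Prop) (v : V0 G) : Prop :=
  forall W, bisaturated H W -> (forall x, V1 x -> W x) ->
    (forall x, V2 x -> W x) -> W v.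

Lemma bisat_clos V1 V2 : bisaturated H (clos V1 V2).
Proof.
  intros l Hk. unfold clos. split; intros Hx.
  - intros Y HY W BW H1 H2. apply (BW l Hk); auto.
    intros X HX. apply Hx; auto.
  - intros X HX W BW H1 H2. apply (BW l Hk); auto.
    intros Y HY. apply Hx; auto.
Qed.

End Aux.

Theorem mainTheorem8 (G : Graph) (B : BiSep G) (H : BHyper B) :
  (* le is a partial order on AT *)
  (forall a, AT H a -> le H a a) /\
  (forall a b c, AT H a -> AT H b -> AT H c ->
     le H a b -> le H b c -> le H a c) /\
  (forall a b, AT H a -> AT H b -> le H a b -> le H b a -> a = b) /\
  (* suprema *)
  (forall a b, AT H a -> AT H b ->
     exists c, AT H c /\ le H a c /\ le H b c /\
       (forall d, AT H d -> le H a d -> le H b d -> le H c d)) /\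
  (* infima *)
  (forall a b, AT H a -> AT H b ->
     exists c, AT H c /\ le H c a /\ le H c b /\
       (forall d, AT H d -> le H d a -> le H d b -> le H d c)).
Proof.
  split; [|split; [|split; [|split]]].
  - intros a _. unfold le. auto.
  - intros [Va Sa Ta] [Vb Sb Tb] [Vc Sc Tc] [_ [HSa HTa]] _ _
      [V1 [S1 T1]] [V2 [S2 T2]]; simpl in *.
    split; [simpl; intros v Hv; auto | split].
    + intros l Hl. destruct (S1 l Hl) as [Hb | [Hk Hn]].
      * apply S2; auto.
      * right. split; auto. intro Hq. apply Hn.
        apply (@quot_mid _ _ H Va Vb Vc l); auto. apply (HSa l Hl).
    + intros l Hl. destruct (T1 l Hl) as [Hb | [Hk Hn]].
      * apply T2; auto.
      * right. split; auto. intro Hq. apply Hn.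
        apply (@quot_mid _ _ H Va Vb Vc l); auto. apply (HTa l Hl).
  - intros [Va Sa Ta] [Vb Sb Tb] [_ [HSa HTa]] [_ [HSb HTb]]
      [V1 [S1 T1]] [V2 [S2 T2]]; simpl in *.
    assert (EV : Va = Vb).
    { extensionality v. apply propositional_extensionality; split; auto. }
    subst Vb.
    assert (ES : Sa = Sb).
    { extensionality l. apply propositional_extensionality; split; intro Hl.
      - destruct (S1 l Hl) as [?|[_ Hn]]; auto. exfalso. apply Hn, HSa, Hl.
      - destruct (S2 l Hl) as [?|[_ Hn]]; auto. exfalso. apply Hn, HSb, Hl. }
    assert (ET : Ta = Tb).
    { extensionality l. apply propositional_extensionality; split; intro Hl.
      - destruct (T1 l Hl) as [?|[_ Hn]]; auto. exfalso. apply Hn, HTa, Hl.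
      - destruct (T2 l Hl) as [?|[_ Hn]]; auto. exfalso. apply Hn, HTb, Hl. }
    subst; reflexivity.
  - intros [Va Sa Ta] [Vb Sb Tb] [_ [HSa HTa]] [_ [HSb HTb]]; simpl in *.
    set (Vc := clos _ _ H Va Vb).
    exists (mkTriple H Vc (fun l => (Sa l \/ Sb l) /\ inQuot H Vc l)
                         (fun l => (Ta l \/ Tb l) /\ inQuot H Vc l)).
    assert (Ha : forall v, Va v -> Vc v) by (intros v Hv W _ H1 _; auto).
    assert (Hb : forall v, Vb v -> Vc v) by (intros v Hv W _ _ H2; auto).
    split; [|split; [|split]].
    + split; [apply bisat_clos|]. simpl. split.
      * intros l [[Hl|Hl] Hq]; split; auto; [apply (HSa l Hl)|apply (HSb l Hl)].
      * intros l [[Hl|Hl] Hq]; split; auto; [apply (HTa l Hl)|apply (HTb l Hl)].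
    + split; [auto|]; simpl; split; intros l Hl.
      * destruct (classic (inQuot H Vc l)); [left; auto|right; split; auto].
        destruct (HSa l Hl) as [[K|K] _]; unfold isS; rewrite K; auto.
      * destruct (classic (inQuot H Vc l)); [left; auto|right; split; auto].
        destruct (HTa l Hl) as [[K|K] _]; unfold isT; rewrite K; auto.
    + split; [auto|]; simpl; split; intros l Hl.
      * destruct (classic (inQuot H Vc l)); [left; auto|right; split; auto].
        destruct (HSb l Hl) as [[K|K] _]; unfold isS; rewrite K; auto.
      * destruct (classic (inQuot H Vc l)); [left; auto|right; split; auto].
        destruct (HTb l Hl) as [[K|K] _]; unfold isT; rewrite K; auto.
    + intros [Vd Sd Td] [Bd _] [V1 [S1 T1]] [V2 [S2 T2]]; simpl in *.
      split; [|split].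
      * intros v Hv. apply Hv; auto.
      * intros l [[Hl|Hl] _]; auto.
      * intros l [[Hl|Hl] _]; auto.
  - intros [Va Sa Ta] [Vb Sb Tb] [BVa [HSa HTa]] [BVb [HSb HTb]]; simpl in *.
    set (Vc := fun v => Va v /\ Vb v).
    exists (mkTriple H Vc
      (fun l => inQuot H Vc l /\ (kind H l = kSfin \/ kind H l = kSinf) /\
                (Sa l \/ LamS_V H Va l) /\ (Sb l \/ LamS_V H Vb l))
      (fun l => inQuot H Vc l /\ (kind H l = kTfin \/ kind H l = kTinf) /\
                (Ta l \/ LamT_V H Va l) /\ (Tb l \/ LamT_V H Vb l))).
    split; [|split; [|split]].
    + split; [apply bisat_inter; auto|]. simpl. split.
      * intros l [Hq [Hk _]]; auto.
      * intros l [Hq [Hk _]]; auto.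
    + split; [intros v [? ?]; auto|]; simpl; split; intros l Hl; tauto.
    + split; [intros v [? ?]; auto|]; simpl; split; intros l Hl; tauto.
    + intros [Vd Sd Td] [Bd [HSd HTd]] [V1 [S1 T1]] [V2 [S2 T2]]; simpl in *.
      split; [|split].
      * intros v Hv; split; auto.
      * intros l Hl. destruct (HSd l Hl) as [Hk _].
        destruct (classic (inQuot H Vc l)).
        -- left. simpl. split; [auto|split; [auto|split]]; [apply S1|apply S2]; auto.
        -- right. split; auto. unfold isS; destruct Hk as [K|K]; rewrite K; auto.
      * intros l Hl. destruct (HTd l Hl) as [Hk _].
        destruct (classic (inQuot H Vc l)).
        -- left. simpl. split; [auto|split; [auto|split]]; [apply T1|apply T2]; auto.
        -- right. split; auto. unfold isT; destruct Hk as [K|K]; rewrite K; auto.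
Qed.
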